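(* For $n \ge 2$, let $R_n$ denote the outcome of Domineering on the $2 \times n$ rectangle and $T_n$ the outcome on the $2 \times n$ torus. Then: (i) if $R_n = H$ then $T_n = H$; (ii) if $R_n = {\rm 1st}$ and $R_{n-1} \in \{{\rm 1st}, H\}$ then $T_n = H$; (iii) if $R_n = {\rm 1st}$ and $R_{n-1} \in \{{\rm 2nd}, V\}$ then $T_n = {\rm 1st}$; (iv) if $R_n \in \{{\rm 2nd}, V\}$ and $R_{n-1} \in \{{\rm 1st}, H\}$ then $T_n \in \{{\rm 2nd}, H\}$.
   Context: Domineering: Vera places vertical dominoes (covering two vertically adjacent empty cells), Hepzibah places horizontal dominoes (covering two horizontally adjacent empty cells); players alternate, and a player who cannot move on her turn loses. The $2\times n$ rectangle has $2$ rows and $n$ columns. The $2 \times n$ torus is the $2\times n$ array of cells with both pairs of opposite edges identified, so horizontal adjacency wraps around from column $n$ to column $1$ (and a vertical domino occupies both cells of a column). The outcome class is $V$ if Vera wins with optimal play regardless of who moves first, $H$ if Hepzibah wins regardless of who moves first, ${\rm 1st}$ if the first player wins, and ${\rm 2nd}$ if the second player wins. *)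

(* Defs.v *)
From mathcomp Require Import all_boot.
Set Implicit Arguments. Unset Strict Implicit. Unset Printing Implicit Defensive.

(* Cells are pairs (row, column) in
   'I_2 * 'I_n; a position is the set of occupied cells.
   Players: true = Vera (vertical), false = Hepzibah (horizontal).
   wrap = false : the 2 x n rectangle; wrap = true : the 2 x n torus
   (horizontal adjacency wraps from the last column to the first). *)

Definition board n := {set 'I_2 * 'I_n}.

Definition hnext (wrap : bool) n (j j' : 'I_n) : bool :=
  if wrap then val j' == (val j + 1) %% n else val j' == val j + 1.

Definition move (wrap : bool) n (p : bool) (b b' : board n) : Prop :=
  if p then
    exists j : 'I_n, (forall i : 'I_2, (i, j) \notin b) /\
      b' = b :|: [set c | c.2 == j]
  else
    exists (i : 'I_2) (j j' : 'I_n), hnext wrap j j' /\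
      (i, j) \notin b /\ (i, j') \notin b /\
      b' = b :|: [set (i, j); (i, j')].

Inductive wins (wrap : bool) n : bool -> board n -> Prop :=
| wins_move p b b' : move wrap p b b' -> loses wrap (~~ p) b' -> wins wrap p b
with loses (wrap : bool) n : bool -> board n -> Prop :=
| loses_all p b : (forall b', move wrap p b b' -> wins wrap (~~ p) b') ->
    loses wrap p b.

Inductive outcome := OV | OH | OFirst | OSecond.

Definition has_outcome (wrap : bool) n (o : outcome) : Prop :=
  let vf := wins wrap true (set0 : board n) in
  let hf := wins wrap false (set0 : board n) in
  match o with
  | OV => vf /\ ~ hf
  | OH => ~ vf /\ hf
  | OFirst => vf /\ hf
  | OSecond => ~ vf /\ ~ hf
  end.

Definition R n o := has_outcome false n o.
Definition T n o := has_outcome true n o.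

(* Main.v *)
Require Import Defs.
From mathcomp Require Import all_boot zify.
From Stdlib Require Import Classical.
Set Implicit Arguments. Unset Strict Implicit. Unset Printing Implicit Defensive.

Scheme wins_mut := Induction for wins Sort Prop with loses_mut := Induction for loses Sort Prop.

Section Sim.
Variables (w1 w2 : bool) (n1 n2 : nat) (f : board n1 -> board n2) (q : bool).
Hypothesis Fwd : forall b b', move w1 q b b' -> move w2 q (f b) (f b').
Hypothesis Bwd : forall b c, move w2 (~~q) (f b) c ->
  exists b', move w1 (~~q) b b' /\ c = f b'.

Lemma sim_all : forall p b (w : wins w1 p b), p = q -> wins w2 q (f b).
Proof.
apply: (@wins_mut _ _ (fun p b _ => p = q -> wins w2 q (f b))
                 (fun p b _ => p = ~~q -> loses w2 p (f b))).
- move=> p b b' mv l IH Hp; subst p.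
  apply: (wins_move (Fwd mv)); exact: IH.
- move=> p b H IH Hp; subst p; constructor => c mv.
  have [b' [mv' ->]] := Bwd mv.
  rewrite negbK; have := IH b' mv'; rewrite negbK; apply; done.
Qed.

Lemma sim_l : forall p b (w : loses w1 p b), p = ~~q -> loses w2 p (f b).
Proof.
apply: (@loses_mut _ _ (fun p b _ => p = q -> wins w2 q (f b))
                 (fun p b _ => p = ~~q -> loses w2 p (f b))).
- move=> p b b' mv l IH Hp; subst p.
  apply: (wins_move (Fwd mv)); exact: IH.
- move=> p b H IH Hp; subst p; constructor => c mv.
  have [b' [mv' ->]] := Bwd mv.
  rewrite negbK; have := IH b' mv'; rewrite negbK; apply; done.
Qed.
End Sim.

Lemma excl w n : forall p (b : board n) (h : wins w p b), loses w p b -> False.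
Proof.
apply: (@wins_mut _ _ (fun p b _ => loses w p b -> False)
                 (fun p b _ => wins w p b -> False)).
- move=> p b b' mv l IH H; inversion H; subst; apply: IH; exact: H0.
- move=> p b H IH W; inversion W; subst; exact: (IH _ H0 H1).
Qed.

Lemma move_card w n p (b b' : board n) : move w p b b' -> #|~: b'| < #|~: b|.
Proof.
move=> mv; apply: proper_card; rewrite properC; apply/properP; split.
  case: p mv => [[j [_ ->]]|[i [j [j' [_ [_ [_ ->]]]]]]]; exact: subsetUl.
case: p mv => [[j [H ->]]|[i [j [j' [_ [H [_ ->]]]]]]] /=.
  by exists (ord0, j); rewrite ?inE ?eqxx ?orbT //; apply: H.
by exists (i, j); rewrite ?inE ?eqxx ?orbT.
Qed.

Lemma det w n : forall k p (b : board n), #|~: b| <= k -> wins w p b \/ loses w p b.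
Proof.
elim=> [|k IH] p b hb.
  right; constructor => b' mv; have := move_card mv; lia.
case: (classic (exists b', move w p b b' /\ loses w (~~p) b')).
  by move=> [b' [mv l]]; left; exact: wins_move mv l.
move=> hn; right; constructor => b' mv.
have hc := move_card mv.
case: (IH (~~p) b' ltac:(lia)) => // l; exfalso; apply: hn; by exists b'.
Qed.

Lemma det0 w n p (b : board n) : wins w p b \/ loses w p b.
Proof. exact: (@det w n _ p b (leqnn _)). Qed.

Lemma hnextT n (k k' : 'I_n) : hnext true k k' <->
  ((k + 1 < n /\ (k' : nat) = k + 1) \/ (k + 1 = n /\ (k' : nat) = 0)).
Proof.
rewrite /hnext; have := ltn_ord k; have := ltn_ord k' => h1 h2.
change (\val k) with (nat_of_ord k); change (\val k') with (nat_of_ord k').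
case: (ltnP (k+1) n) => h.
  rewrite modn_small //; split; [move/eqP; lia| case; [case=> _ ->//|lia]].
have e : k + 1 = n by lia.
rewrite e modnn; split; [move/eqP; lia | case; [lia| case=> _ ->//]].
Qed.

Lemma mono_fwd n b b' : move false false b b' -> move (n:=n) true false (id b) (id b').
Proof.
move=> [i [j [j' [h rest]]]]; exists i, j, j'; split => //.
apply/hnextT; move: h; rewrite /hnext /= => /eqP h; have := ltn_ord j'; lia.
Qed.

Lemma mono_bwd n (b c : board n) : move true (~~false) (id b) c ->
  exists b', move false (~~false) b b' /\ c = id b'.
Proof. by move=> h; exists c. Qed.

Lemma domW n (b : board n) : wins false false b -> wins true false b.
Proof. move=> h; exact: (sim_all (@mono_fwd n) (@mono_bwd n) h). Qed.

Lemma domL n (b : board n) : loses false true b -> loses true true b.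
Proof. move=> h; exact: (sim_l (@mono_fwd n) (@mono_bwd n) h). Qed.

Section Shift.
Variable m : nat.
Notation N := m.+2.
Notation M := m.+1.

Definition sh (j : 'I_(m.+2)) (k : 'I_(m.+1)) : 'I_(m.+2) :=
  inord (if k + j + 1 < N then k + j + 1 else k + j + 1 - N).
Definition unsh (j k : 'I_(m.+2)) : 'I_(m.+1) :=
  inord (if j < k then k - j - 1 else k + N - j - 1).

Lemma shP (j : 'I_(m.+2)) (k : 'I_(m.+1)) : (k + j + 1 < N /\ (sh j k : nat) = k + j + 1) \/
                (N <= k + j + 1 /\ (sh j k : nat) = k + j + 1 - N).
Proof.
have := ltn_ord j; have := ltn_ord k => h1 h2.
rewrite /sh; case: ifP => h; rewrite inordK; lia.
Qed.

Lemma unshP (j k : 'I_(m.+2)) : (k : nat) <> j -> (j < k /\ (unsh j k : nat) = k - j - 1) \/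
                (k < j /\ (unsh j k : nat) = k + N - j - 1).
Proof.
have := ltn_ord j; have := ltn_ord k => h1 h2 h3.
rewrite /unsh; case: ifP => h; rewrite inordK; lia.
Qed.

Lemma sh_neq (j : 'I_(m.+2)) (k : 'I_(m.+1)) : (sh j k : nat) <> j.
Proof. move: (ltn_ord j) (ltn_ord k) (shP j k); lia. Qed.

Lemma unsh_sh (j : 'I_(m.+2)) (k : 'I_(m.+1)) : unsh j (sh j k) = k.
Proof.
apply: val_inj => /=; have h := @sh_neq j k.
have := ltn_ord j; have := ltn_ord k; have := @shP j k; have := unshP h; lia.
Qed.

Lemma sh_unsh (j k : 'I_(m.+2)) : (k : nat) <> j -> sh j (unsh j k) = k.
Proof.
move=> h; apply: val_inj => /=.
have := ltn_ord j; have := ltn_ord k; have := @shP j (unsh j k); have := unshP h; lia.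
Qed.

Lemma unsh_eq (j k : 'I_(m.+2)) (k' : 'I_(m.+1)) : (k : nat) <> j -> (unsh j k == k') = (k == sh j k').
Proof.
move=> h; apply/eqP/eqP => [<-|->]; [by rewrite sh_unsh | exact: unsh_sh].
Qed.

Definition phi (j : 'I_(m.+2)) (b : board m.+1) : board m.+2 :=
  [set c | (c.2 == j) || ((c.1, unsh j c.2) \in b)].

End Shift.

Section Phi.
Variables (m : nat) (j : 'I_(m.+2)).

Lemma sh_neqb (k : 'I_(m.+1)) : (sh j k == j) = false.
Proof. apply/eqP => e; apply: (@sh_neq m j k); rewrite e. done. Qed.

Lemma neq_nat (c : 'I_(m.+2)) : c != j -> (c : nat) <> j.
Proof. by move=> ne e; move/eqP: ne; apply; apply: val_inj. Qed.

Lemma phiE (b : board m.+1) i c : ((i, c) \in phi j b) = (c == j) || ((i, unsh j c) \in b).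
Proof. by rewrite inE. Qed.

Lemma fwdV b b' : move false true b b' -> move true true (phi j b) (phi j b').
Proof.
move=> [k [H ->]]; exists (sh j k); split.
  by move=> i; rewrite phiE sh_neqb unsh_sh; apply: H.
apply/setP => -[i0 c]; rewrite !inE /=.
case: (eqVneq c j) => [->|ne]; first by rewrite ?eqxx.
by rewrite (unsh_eq _ (neq_nat ne)).
Qed.

Lemma bwdV (b : board m.+1) c : move true (~~false) (phi j b) c ->
  exists b', move false (~~false) b b' /\ c = phi j b'.
Proof.
move=> [k [H ->]].
have nk : k != j by move: (H ord0); rewrite phiE negb_or => /andP[].
exists (b :|: [set x | x.2 == unsh j k]); split.
  exists (unsh j k); split => // i; move: (H i); rewrite phiE negb_or => /andP[].
  done.
apply/setP => -[i0 x]; rewrite !inE /=.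
case: (eqVneq x j) => [->|ne]; first by rewrite ?eqxx.
by rewrite (unsh_eq _ (neq_nat ne)) (sh_unsh (neq_nat nk)).
Qed.

Lemma fwdH b b' : move false false b b' -> move true false (phi j b) (phi j b').
Proof.
move=> [i [k [k' [hn [H1 [H2 ->]]]]]]; exists i, (sh j k), (sh j k'); split.
  apply/hnextT; move: hn; rewrite /hnext /= => /eqP hn.
  have := ltn_ord j; have := ltn_ord k; have := ltn_ord k'.
  have := @shP m j k; have := @shP m j k'; lia.
split; first by rewrite phiE sh_neqb unsh_sh.
split; first by rewrite phiE sh_neqb unsh_sh.
apply/setP => -[i0 c]; rewrite !inE /=.
case: (eqVneq c j) => [->|ne]; first by rewrite ?eqxx.
by rewrite !xpair_eqE !(unsh_eq _ (neq_nat ne)).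
Qed.

Lemma bwdH (b : board m.+1) c : move true (~~true) (phi j b) c ->
  exists b', move false (~~true) b b' /\ c = phi j b'.
Proof.
move=> [i [k1 [k2 [hn [H1 [H2 ->]]]]]].
move: H1 H2; rewrite !phiE !negb_or => /andP[n1 H1] /andP[n2 H2].
exists (b :|: [set (i, unsh j k1); (i, unsh j k2)]); split.
  exists i, (unsh j k1), (unsh j k2); split => //.
  rewrite /hnext /=; apply/eqP; move/hnextT: hn => hn.
  have := ltn_ord j; have := ltn_ord k1; have := ltn_ord k2.
  have := unshP (neq_nat n1); have := unshP (neq_nat n2); lia.
apply/setP => -[i0 x]; rewrite !inE /=.
case: (eqVneq x j) => [->|ne]; first by rewrite ?eqxx.
by rewrite !xpair_eqE !(unsh_eq _ (neq_nat ne)) (sh_unsh (neq_nat n1)) (sh_unsh (neq_nat n2)).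
Qed.

Lemma phiW (b : board m.+1) : wins false false b -> wins true false (phi j b).
Proof. move=> h; exact: (sim_all fwdH bwdV h). Qed.

Lemma phiL (b : board m.+1) : loses false false b -> loses true false (phi j b).
Proof. move=> h; exact: (sim_l fwdV bwdH h). Qed.

End Phi.

Lemma phi0 m (j : 'I_(m.+2)) : phi j set0 = set0 :|: [set c | c.2 == j].
Proof. by apply/setP => -[i c]; rewrite !inE orbF. Qed.

Lemma T1a m : wins true true (set0 : board m.+2) -> loses false false (set0 : board m.+1).
Proof.
move=> h; inversion h as [p b b' mv l]; subst.
move: mv => [j [_ e]]; rewrite -phi0 in e; subst.
case: (det0 false false (set0 : board m.+1)) => // w.
by case: (excl (phiW j w) l).
Qed.

Lemma T1b m : loses false false (set0 : board m.+1) -> wins true true (set0 : board m.+2).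
Proof.
move=> l; apply: (@wins_move _ _ _ _ (phi ord0 set0)); last exact: phiL.
exists ord0; split; last exact: phi0.
by move=> i; rewrite inE.
Qed.

Theorem mainTheorem13 (n : nat) (hn : 2 <= n) :
  (R n OH -> T n OH) /\
  (R n OFirst -> (R n.-1 OFirst \/ R n.-1 OH) -> T n OH) /\
  (R n OFirst -> (R n.-1 OSecond \/ R n.-1 OV) -> T n OFirst) /\
  ((R n OSecond \/ R n OV) -> (R n.-1 OFirst \/ R n.-1 OH) ->
     (T n OSecond \/ T n OH)).
Proof.
case: n hn => [|[|m]] // _; rewrite /R /T /has_outcome /=.
have noV : wins false false (set0 : board m.+1) -> ~ wins true true (set0 : board m.+2).
  by move=> w /T1a l; exact: excl w l.
split; [|split; [|split]].
- move=> [nv hf]; split; last exact: (@domW m.+2 set0 hf).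
  case: (det0 false true (set0 : board m.+2)) => // l w.
  exact: excl w (domL l).
- move=> [_ hf] H; split; last exact: domW hf.
  by apply: noV; case: H => -[].
- move=> [_ hf] H; split; last exact: domW hf.
  apply: T1b; case: (det0 false false (set0 : board m.+1)) => // w.
  by case: H => -[].
- move=> _ H; have nv : ~ wins true true (set0 : board m.+2) by apply: noV; case: H => -[].
  case: (classic (wins true false (set0 : board m.+2))) => h; [right|left]; tauto.
Qed.
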